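(* Let $N\ge3$ and $\alpha>-2$. There exists a constant $C_{N,\alpha}>0$ depending only on $N$ and $\alpha$ such that for every $\beta\le\beta_0$, $$u_\beta(r)\le-(4+\alpha)\ln r+C_{N,\alpha}\quad\text{for all }r>0.$$
   Context: Fix an integer $N\ge3$ and $\alpha>-2$. For $\beta\in\mathbb{R}$, $u_\beta$ denotes the radial function $u_\beta(x)=u_\beta(r)$, $r=|x|$, solving the initial value problem $\Delta^2u=|x|^\alpha e^u$ for $r\in[0,R_\beta)$, $u'(0)=u'''(0)=0$, $u(0)=0$, $\Delta u(0)=\beta$, where $\Delta u=u''+\frac{N-1}{r}u'$ is the radial Laplacian in $\mathbb{R}^N$ and $[0,R_\beta)$ is the maximal interval of existence. $u_\beta$ is called an entire solution if $R_\beta=\infty$. $\beta_0:=\sup\{\beta\in\mathbb{R}:R_\beta=\infty\}$; it is known that $\beta_0$ is a finite negative number and that $R_\beta=\infty$ if and only if $\beta\le\beta_0$. *)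

(* Defs.v *)
From Stdlib Require Import Reals.
From Coquelicot Require Import Coquelicot.
Open Scope R_scope.

Definition rlap (N : nat) (f : R -> R) (r : R) : R :=
  Derive_n f 2 r + (INR N - 1) / r * Derive f r.

(* u : [0,oo) -> R is an entire (R_beta = +oo) radial solution of
   Delta^2 u = |x|^alpha e^u with u(0)=0, u'(0)=0, Delta u(0)=beta and the
   regularity condition replacing u'''(0)=0. *)
Definition entire_radial_solution (N : nat) (alpha beta : R) (u : R -> R) : Prop :=
  (forall r, 0 < r -> forall k, (k <= 3)%nat -> ex_derive (Derive_n u k) r) /\
  (forall r, 0 < r ->
     Derive_n (rlap N u) 2 r + (INR N - 1) / r * Derive (rlap N u) r
     = Rpower r alpha * exp (u r)) /\
  u 0 = 0 /\
  filterlim u (at_right 0) (locally 0) /\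
  filterlim (Derive u) (at_right 0) (locally 0) /\
  filterlim (rlap N u) (at_right 0) (locally beta) /\
  filterlim (fun r => r ^ (N - 1) * Derive (rlap N u) r) (at_right 0) (locally 0).

Definition beta0 (N : nat) (alpha : R) : Rbar :=
  Lub_Rbar (fun beta => exists u, entire_radial_solution N alpha beta u).

(* Main.v *)
From Stdlib Require Import Reals Lra Lia.
From Coquelicot Require Import Coquelicot.
Require Import Defs.
Open Scope R_scope.

Lemma dplus (f g : R -> R) x a b : is_derive f x a -> is_derive g x b -> is_derive (fun t => f t + g t) x (a+b).
Proof. intros H1 H2. exact (is_derive_plus f g x a b H1 H2). Qed.
Lemma dmult (f g : R -> R) x a b : is_derive f x a -> is_derive g x b -> is_derive (fun t => f t * g t) x (a * g x + f x * b).
Proof. intros H1 H2. exact (is_derive_mult f g x a b H1 H2 Rmult_comm). Qed.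
Lemma deq (f : R -> R) (x l l' : R) : is_derive f x l -> l = l' -> is_derive f x l'.
Proof. intros H ->; exact H. Qed.
Lemma dconst c x : is_derive (fun _ => c) x 0.
Proof. exact (is_derive_const c x). Qed.
Lemma did x : is_derive (fun t => t) x 1.
Proof. exact (is_derive_id x). Qed.
Lemma dpowx n x : is_derive (fun t => t ^ n) x (INR n * x ^ Init.Nat.pred n).
Proof. eapply deq. apply (is_derive_pow (fun t => t) n x 1). apply did. ring. Qed.
Lemma dinvx x : x <> 0 -> is_derive (fun t => / t) x (- / x^2).
Proof. intros h. eapply deq. apply (is_derive_inv (fun t => t) x 1). apply did. exact h. field. exact h. Qed.

Lemma locally_pos x : 0 < x -> locally x (fun t => 0 < t).
Proof.
intros hx. exists (mkposreal x hx). intros y Hy. unfold ball in Hy; simpl in Hy.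
unfold AbsRing_ball, abs, minus, plus, opp in Hy; simpl in Hy. apply Rabs_def2 in Hy. lra.
Qed.

Definition Efun (N : nat) (u : R -> R) (y : R) : R :=
  Derive_n u 3 y + (INR N - 1) * (- / y^2 * Derive u y + / y * Derive_n u 2 y).

Section S.
Lemma dk (u : R -> R) k x :
  (forall r, 0 < r -> forall k, (k <= 3)%nat -> ex_derive (Derive_n u k) r) -> 0 < x -> (k <= 3)%nat ->
  is_derive (Derive_n u k) x (Derive_n u (S k) x).
Proof. intros H hx hk. apply Derive_correct. apply H; auto. Qed.
End S.

Lemma dv N u x :
  (forall r, 0 < r -> forall k, (k <= 3)%nat -> ex_derive (Derive_n u k) r) -> 0 < x ->
  is_derive (rlap N u) x (Efun N u x).
Proof.
intros H hx. unfold rlap, Efun.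
pose proof (dk u 2 x H hx ltac:(lia)) as d2.
pose proof (dk u 1 x H hx ltac:(lia)) as d1. simpl in d1.
eapply deq. apply dplus. exact d2.
apply (dmult (fun t => (INR N - 1) / t) (Derive u)). unfold Rdiv.
apply (is_derive_scal (fun t => / t)). apply dinvx; lra. exact d1.
simpl. field. lra.
Qed.

Lemma dE N u x :
  (forall r, 0 < r -> forall k, (k <= 3)%nat -> ex_derive (Derive_n u k) r) -> 0 < x ->
  ex_derive (Efun N u) x.
Proof.
intros H hx. unfold Efun.
pose proof (dk u 3 x H hx ltac:(lia)) as d3.
pose proof (dk u 2 x H hx ltac:(lia)) as d2.
pose proof (dk u 1 x H hx ltac:(lia)) as d1. simpl in d1.
eexists. apply dplus. exact d3. apply (is_derive_scal (fun t => - / t^2 * Derive u t + / t * Derive_n u 2 t)).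
apply dplus. apply dmult. eapply deq. apply (is_derive_opp (fun t => / t^2)).
apply (is_derive_inv (fun t => t^2)). apply dpowx. apply pow_nonzero; lra. reflexivity.
exact d1. apply dmult. apply dinvx; lra. exact d2.
Qed.

Lemma dv1 N u x :
  (forall r, 0 < r -> forall k, (k <= 3)%nat -> ex_derive (Derive_n u k) r) -> 0 < x ->
  is_derive (Derive (rlap N u)) x (Derive_n (rlap N u) 2 x).
Proof.
intros H hx.
assert (L : locally x (fun t => Efun N u t = Derive (rlap N u) t)).
{ eapply filter_imp; [|apply (locally_pos x hx)]. intros t ht. symmetry.
  apply is_derive_unique. apply dv; auto. }
apply (is_derive_ext_loc (Efun N u)). exact L.
simpl. replace (Derive (fun y => Derive (fun z => rlap N u z) y) x) with (Derive (Efun N u) x).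
apply Derive_correct. apply dE; auto.
apply Derive_ext_loc. exact L.
Qed.

Lemma powpred n x : x * x ^ (Init.Nat.pred (S n)) = x ^ (S n).
Proof. simpl. ring. Qed.

Lemma dG N u x : (1 <= N)%nat ->
  (forall r, 0 < r -> forall k, (k <= 3)%nat -> ex_derive (Derive_n u k) r) -> 0 < x ->
  is_derive (fun t => t^(N-1) * Derive u t) x (x^(N-1) * rlap N u x).
Proof.
intros hN H hx.
pose proof (dk u 1 x H hx ltac:(lia)) as d1. simpl in d1.
eapply deq. apply dmult. apply dpowx. exact d1.
unfold rlap. destruct N as [|[|m]]; [lia| |].
- simpl. field. lra.
- replace (S (S m) - 1)%nat with (S m) by lia. rewrite <- (powpred m x).
  replace (INR (S (S m)) - 1) with (INR (S m)) by (rewrite (S_INR (S m)); ring).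
  simpl. field. lra.
Qed.

Lemma dH N alpha u x : (1 <= N)%nat ->
  (forall r, 0 < r -> forall k, (k <= 3)%nat -> ex_derive (Derive_n u k) r) ->
  (forall r, 0 < r ->
     Derive_n (rlap N u) 2 r + (INR N - 1) / r * Derive (rlap N u) r
     = Rpower r alpha * exp (u r)) -> 0 < x ->
  is_derive (fun t => t^(N-1) * Derive (rlap N u) t) x (x^(N-1) * (Rpower x alpha * exp (u x))).
Proof.
intros hN H Heq hx.
pose proof (dv1 N u x H hx) as d1.
eapply deq. apply dmult. apply dpowx. exact d1.
rewrite <- (Heq x hx).
destruct N as [|[|m]]; [lia| |].
- simpl. field. lra.
- replace (S (S m) - 1)%nat with (S m) by lia. rewrite <- (powpred m x).
  replace (INR (S (S m)) - 1) with (INR (S m)) by (rewrite (S_INR (S m)); ring).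
  simpl. field. lra.
Qed.
Lemma cmp (f g df dg : R -> R) (a b : R) : a <= b ->
  (forall x, a <= x <= b -> is_derive f x (df x)) ->
  (forall x, a <= x <= b -> is_derive g x (dg x)) ->
  (forall x, a <= x <= b -> dg x <= df x) -> g b - g a <= f b - f a.
Proof.
intros Hab Hf Hg Hle.
assert (D : forall x, a <= x <= b -> is_derive (fun x => f x - g x) x (df x - dg x)).
{ intros x Hx. exact (is_derive_minus f g x (df x) (dg x) (Hf x Hx) (Hg x Hx)). }
destruct (MVT_gen (fun x => f x - g x) a b (fun x => df x - dg x)) as [c [Hc E]].
- intros x Hx. rewrite Rmin_left in Hx by lra. rewrite Rmax_right in Hx by lra.
  apply D; lra.
- intros x Hx. rewrite Rmin_left in Hx by lra. rewrite Rmax_right in Hx by lra.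
  apply continuity_pt_filterlim. apply (ex_derive_continuous (fun x => f x - g x)).
  eexists. apply D; lra.
- rewrite Rmin_left in Hc by lra. rewrite Rmax_right in Hc by lra.
  simpl in E. assert (0 <= df c - dg c) by (specialize (Hle c Hc); lra).
  assert (0 <= (df c - dg c) * (b - a)) by (apply Rmult_le_pos; lra). lra.
Qed.

Lemma lim_le (F : R -> R) (L r : R) : 0 < r ->
  (forall s, 0 < s < r -> F s <= F r) ->
  filterlim F (at_right 0) (locally L) -> L <= F r.
Proof.
intros Hr HF Hl.
destruct (Rle_lt_dec L (F r)) as [h|h]; [exact h|].
assert (He : 0 < L - F r) by lra.
destruct (Hl _ (locally_ball L (mkposreal _ He))) as [d Hd].
set (s := Rmin (d/2) (r/2)).
assert (Hs0 : 0 < s) by (unfold s; apply Rmin_pos; destruct d; simpl; lra).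
assert (Hs1 : s < r) by (unfold s; pose proof (Rmin_r (d/2) (r/2)); lra).
assert (Hb : ball 0 d s).
{ pose proof (cond_pos d). unfold ball; simpl. unfold AbsRing_ball, abs, minus, plus, opp; simpl.
  rewrite Ropp_0, Rplus_0_r, Rabs_pos_eq by lra. unfold s. pose proof (Rmin_l (d/2) (r/2)); lra. }
specialize (Hd s Hb Hs0). unfold ball in Hd; simpl in Hd.
unfold AbsRing_ball, abs, minus, plus, opp in Hd; simpl in Hd.
specialize (HF s (conj Hs0 Hs1)).
apply Rabs_def2 in Hd. lra.
Qed.

Lemma lim_ge (F : R -> R) (L r : R) : 0 < r ->
  (forall s, 0 < s < r -> F r <= F s) ->
  filterlim F (at_right 0) (locally L) -> F r <= L.
Proof.
intros Hr HF Hl.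
assert (- L <= - F r); [|lra].
apply (lim_le (fun x => - F x)); auto.
- intros s Hs. specialize (HF s Hs). lra.
- eapply filterlim_comp; [exact Hl|]. eapply (filterlim_opp L).
Qed.
Lemma expmono x y : x <= y -> exp x <= exp y.
Proof. intros [h|h]. left; apply exp_increasing; exact h. subst; lra. Qed.
Lemma lnmono x y : 0 < x -> x <= y -> ln x <= ln y.
Proof. intros h [h'|h']. left; apply ln_increasing; lra. subst; lra. Qed.

Lemma lim_mult (f g : R -> R) (a b : R) : filterlim f (at_right 0) (locally a) -> filterlim g (at_right 0) (locally b) ->
  filterlim (fun x => f x * g x) (at_right 0) (locally (a*b)).
Proof.
intros Hf Hg. eapply filterlim_comp_2; [exact Hf|exact Hg|].
apply (filterlim_mult a b).
Qed.
Lemma lim_plus (f g : R -> R) (a b : R) : filterlim f (at_right 0) (locally a) -> filterlim g (at_right 0) (locally b) ->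
  filterlim (fun x => f x + g x) (at_right 0) (locally (a+b)).
Proof.
intros Hf Hg. eapply filterlim_comp_2; [exact Hf|exact Hg|].
apply (filterlim_plus a b).
Qed.
Lemma lim_const (c : R) : filterlim (fun _ => c) (at_right 0) (locally c).
Proof. apply filterlim_const. Qed.
Lemma lim_cont (f : R -> R) : continuous f 0 -> filterlim f (at_right 0) (locally (f 0)).
Proof.
intros H. eapply filterlim_filter_le_1; [|exact H].
intros P [d Hd]. exists d. intros y Hy _. apply Hd; exact Hy.
Qed.
Lemma lim_pow n : filterlim (fun x => x ^ S n) (at_right 0) (locally 0).
Proof.
replace 0 with ((fun x => x ^ S n) 0) at 2 by (simpl; ring).
apply lim_cont. apply (ex_derive_continuous (fun x => x ^ S n)).
eexists. apply (is_derive_pow (fun t => t) (S n) 0 1). exact (is_derive_id 0).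
Qed.
Lemma lim_exp (f : R -> R) (a : R) : filterlim f (at_right 0) (locally a) -> filterlim (fun x => exp (f x)) (at_right 0) (locally (exp a)).
Proof.
intros Hf. eapply filterlim_comp; [exact Hf|].
apply (ex_derive_continuous exp). eexists. apply is_derive_exp.
Qed.
Lemma lim_rpow y : 0 < y -> filterlim (fun x => Rpower x y) (at_right 0) (locally 0).
Proof.
intros hy P [e He].
exists (mkposreal (Rpower e (/ y)) ltac:(unfold Rpower; apply exp_pos)).
intros x Hx hx. apply He. unfold ball in *; simpl in *.
unfold AbsRing_ball, abs, minus, plus, opp in *; simpl in *.
rewrite Ropp_0, Rplus_0_r in *. rewrite Rabs_pos_eq in Hx by lra.
assert (0 < Rpower x y) by (unfold Rpower; apply exp_pos).
rewrite Rabs_pos_eq by lra.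
pose proof (cond_pos e) as he.
replace (pos e) with (Rpower (Rpower e (/y)) y).
2:{ rewrite Rpower_mult. replace (/ y * y) with 1 by (field; lra). apply Rpower_1; lra. }
unfold Rpower at 1 3. apply exp_increasing. apply Rmult_lt_compat_l; [lra|].
unfold Rpower in Hx. apply ln_increasing; lra.
Qed.

Lemma mono (f df : R -> R) a b : a <= b -> (forall x, a <= x <= b -> is_derive f x (df x)) ->
  (forall x, a <= x <= b -> 0 <= df x) -> f a <= f b.
Proof.
intros hab Hf Hd. pose proof (cmp f (fun _ => 0) df (fun _ => 0) a b hab Hf (fun x _ => dconst 0 x) Hd). lra.
Qed.
Lemma monod (f df : R -> R) a b : a <= b -> (forall x, a <= x <= b -> is_derive f x (df x)) ->
  (forall x, a <= x <= b -> df x <= 0) -> f b <= f a.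
Proof.
intros hab Hf Hd. pose proof (cmp (fun _ => 0) f (fun _ => 0) df a b hab (fun x _ => dconst 0 x) Hf Hd). lra.
Qed.

Lemma lim_pow' n : (1 <= n)%nat -> filterlim (fun x => x ^ n) (at_right 0) (locally 0).
Proof. intros h. destruct n; [lia|]. apply lim_pow. Qed.

Lemma rpow_pos x y : 0 < Rpower x y.
Proof. unfold Rpower; apply exp_pos. Qed.

Lemma drpow y x : 0 < x -> is_derive (fun s => Rpower s y) x (y * Rpower x (y - 1)).
Proof. intros hx. apply is_derive_Reals. apply derivable_pt_lim_power. exact hx. Qed.

Lemma rpow_split N alpha s : (1 <= N)%nat -> 0 < s ->
  Rpower s (INR N + alpha - 1) = s ^ (N-1) * Rpower s alpha.
Proof.
intros hN hs. rewrite <- Rpower_pow by exact hs. rewrite <- Rpower_plus.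
f_equal. rewrite minus_INR by lia. simpl. ring.
Qed.

Section Sol.
End Sol.

Lemma Hnn N alpha beta u : (3 <= N)%nat -> entire_radial_solution N alpha beta u ->
  forall r, 0 < r -> 0 <= r^(N-1) * Derive (rlap N u) r.
Proof.
intros hN Hu. destruct Hu as (Hd & Heq & H0 & Hl0 & Hl1 & Hlv & HlH).
intros r hr. apply (lim_le (fun t => t^(N-1) * Derive (rlap N u) t)); auto.
intros s hs. apply (mono (fun t => t^(N-1) * Derive (rlap N u) t) (fun x => x^(N-1) * (Rpower x alpha * exp (u x))) s r); [lra| |].
- intros x hx. apply dH; auto; try lia; lra.
- intros x hx. apply Rmult_le_pos. apply pow_le; lra.
  apply Rmult_le_pos; left; [apply rpow_pos|apply exp_pos].
Qed.

Lemma v1nn N alpha beta u : (3 <= N)%nat -> entire_radial_solution N alpha beta u ->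
  forall r, 0 < r -> 0 <= Derive (rlap N u) r.
Proof.
intros hN Hu r hr. pose proof (Hnn N alpha beta u hN Hu r hr).
pose proof (pow_lt r (N-1) hr).
destruct (Rle_lt_dec 0 (Derive (rlap N u) r)); auto.
assert (r^(N-1) * Derive (rlap N u) r < 0) by (apply Rmult_pos_neg; auto). lra.
Qed.

Lemma dvv N alpha beta u : entire_radial_solution N alpha beta u ->
  forall x, 0 < x -> is_derive (rlap N u) x (Derive (rlap N u) x).
Proof.
intros Hu x hx. destruct Hu as (Hd & _). apply Derive_correct. eexists. apply dv; auto.
Qed.

Lemma du N alpha beta u : entire_radial_solution N alpha beta u ->
  forall x, 0 < x -> is_derive u x (Derive u x).
Proof.
intros Hu x hx. destruct Hu as (Hd & _). apply Derive_correct. apply (Hd x hx 0%nat). lia.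
Qed.

Lemma vmono N alpha beta u : (3 <= N)%nat -> entire_radial_solution N alpha beta u ->
  forall a b, 0 < a -> a <= b -> rlap N u a <= rlap N u b.
Proof.
intros hN Hu a b ha hab. apply (mono _ (Derive (rlap N u))); auto.
- intros x hx. apply (dvv N alpha beta u Hu); lra.
- intros x hx. apply (v1nn N alpha beta u hN Hu); lra.
Qed.

Lemma dminus (f g : R -> R) x a b : is_derive f x a -> is_derive g x b -> is_derive (fun t => f t - g t) x (a - b).
Proof. intros H1 H2. exact (is_derive_minus f g x a b H1 H2). Qed.
Lemma dscal (f : R -> R) x k a : is_derive f x a -> is_derive (fun t => k * f t) x (k * a).
Proof. intros H. exact (is_derive_scal f x k a H). Qed.

Lemma powS r N : (1 <= N)%nat -> r ^ N = r * r ^ (N-1).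
Proof. intros h. destruct N; [lia|]. simpl. rewrite Nat.sub_0_r. ring. Qed.

Lemma u1b N alpha beta u : (3 <= N)%nat -> entire_radial_solution N alpha beta u ->
  forall r, 0 < r -> Derive u r <= rlap N u r * r / INR N.
Proof.
intros hN Hu r hr. pose proof Hu as Hu'. destruct Hu' as (Hd & Heq & H0 & Hl0 & Hl1 & Hlv & HlH).
set (k := rlap N u r / INR N).
assert (hNp : 0 < INR N) by (apply lt_0_INR; lia).
set (F := fun s => s^(N-1) * Derive u s - k * s^N).
assert (LF : F r <= 0).
{ apply (lim_ge F 0 r hr).
  - intros s hs. apply (monod F (fun x => x^(N-1) * rlap N u x - k * (INR N * x^(Init.Nat.pred N))) s r); [lra| |].
    + intros x hx. unfold F. apply dminus. apply dG; auto; try lia; lra. apply dscal. apply dpowx.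
    + intros x hx. replace (Init.Nat.pred N) with (N-1)%nat by lia. unfold k.
      replace (x ^ (N - 1) * rlap N u x - rlap N u r / INR N * (INR N * x ^ (N - 1))) with
        (x ^ (N - 1) * (rlap N u x - rlap N u r)) by (field; lra).
      assert (rlap N u x <= rlap N u r) by (apply (vmono N alpha beta u hN Hu); lra).
      assert (0 <= x^(N-1)) by (apply pow_le; lra). nra.
  - unfold F. apply (filterlim_ext (fun s => s^(N-1) * Derive u s + (-k) * s^N)).
    intros x; ring.
    pose proof (lim_plus _ _ _ _ (lim_mult _ _ _ _ (lim_pow' (N-1) ltac:(lia)) Hl1)
      (lim_mult (fun _ => -k) (fun s => s^N) _ _ (lim_const _) (lim_pow' N ltac:(lia)))) as L.
    replace (0 * 0 + (-k) * 0) with 0 in L by ring. exact L. }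
unfold F in LF. rewrite (powS r N) in LF by lia.
pose proof (pow_lt r (N-1) hr).
assert (Derive u r <= k * r); [|unfold k in *; replace (rlap N u r * r / INR N) with (rlap N u r / INR N * r) by (field; lra); lra].
apply (Rmult_le_reg_l (r^(N-1))); auto. nra.
Qed.

Lemma udec N alpha beta u : (3 <= N)%nat -> entire_radial_solution N alpha beta u ->
  (forall r, 0 < r -> rlap N u r <= 0) ->
  forall a b, 0 < a -> a <= b -> u b <= u a.
Proof.
intros hN Hu Hneg a b ha hab. apply (monod u (Derive u)); auto.
- intros x hx. apply (du N alpha beta u Hu); lra.
- intros x hx. pose proof (u1b N alpha beta u hN Hu x ltac:(lra)).
  pose proof (Hneg x ltac:(lra)). assert (0 < INR N) by (apply lt_0_INR; lia).
  assert (rlap N u x * x / INR N <= 0); [|lra].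
  unfold Rdiv. apply Rmult_le_0_r; [|left; apply Rinv_0_lt_compat; lra]. nra.
Qed.

Lemma Hlow N alpha beta u : (3 <= N)%nat -> -2 < alpha -> entire_radial_solution N alpha beta u ->
  (forall r, 0 < r -> rlap N u r <= 0) ->
  forall r, 0 < r -> exp (u r) * Rpower r (INR N + alpha) / (INR N + alpha) <= r^(N-1) * Derive (rlap N u) r.
Proof.
intros hN ha Hu Hneg r hr. pose proof Hu as Hu'. destruct Hu' as (Hd & Heq & H0 & Hl0 & Hl1 & Hlv & HlH).
assert (h3 : 3 <= INR N) by (replace 3 with (INR 3) by (simpl; ring); apply le_INR; lia).
set (y := INR N + alpha). assert (hy : 0 < y) by (unfold y; lra).
set (c := exp (u r) / y).
set (F := fun s => s^(N-1) * Derive (rlap N u) s - c * Rpower s y).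
assert (LF : 0 <= F r).
{ apply (lim_le F 0 r hr).
  - intros s hs. apply (mono F (fun x => x^(N-1) * (Rpower x alpha * exp (u x)) - c * (y * Rpower x (y - 1))) s r); [lra| |].
    + intros x hx. unfold F. apply dminus. apply dH; auto; try lia; lra. apply dscal. apply drpow; lra.
    + intros x hx. unfold y. rewrite rpow_split by (lia || lra). fold y. unfold c.
      replace (x ^ (N - 1) * (Rpower x alpha * exp (u x)) - exp (u r) / y * (y * (x ^ (N - 1) * Rpower x alpha)))
        with (x ^ (N - 1) * Rpower x alpha * (exp (u x) - exp (u r))) by (field; lra).
      apply Rmult_le_pos. apply Rmult_le_pos. apply pow_le; lra. left; apply rpow_pos.
      assert (u r <= u x) by (apply (udec N alpha beta u hN Hu Hneg); lra).
      pose proof (expmono _ _ H). lra.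
  - unfold F. apply (filterlim_ext (fun s => s^(N-1) * Derive (rlap N u) s + (-c) * Rpower s y)).
    intros x; ring.
    pose proof (lim_plus _ _ _ _ HlH
      (lim_mult (fun _ => -c) (fun s => Rpower s y) _ _ (lim_const _) (lim_rpow y hy))) as L.
    replace (0 + (-c) * 0) with 0 in L by ring. exact L. }
unfold F, c in LF. unfold y in *. lra.
Qed.

Lemma Hmono N alpha beta u : (3 <= N)%nat -> entire_radial_solution N alpha beta u ->
  forall a b, 0 < a -> a <= b -> a^(N-1) * Derive (rlap N u) a <= b^(N-1) * Derive (rlap N u) b.
Proof.
intros hN Hu a b ha hab. pose proof Hu as Hu'. destruct Hu' as (Hd & Heq & _).
apply (mono (fun t => t^(N-1) * Derive (rlap N u) t) (fun x => x^(N-1) * (Rpower x alpha * exp (u x))) a b); auto.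
- intros x hx. apply dH; auto; try lia; lra.
- intros x hx. apply Rmult_le_pos. apply pow_le; lra.
  apply Rmult_le_pos; left; [apply rpow_pos|apply exp_pos].
Qed.

Lemma vnegb N alpha beta u : (3 <= N)%nat -> -2 < alpha -> entire_radial_solution N alpha beta u ->
  (forall r, 0 < r -> rlap N u r <= 0) ->
  forall r, 0 < r -> r * (exp (u r) * Rpower r (INR N + alpha) / (INR N + alpha)) / (2*r)^(N-1) <= - rlap N u r.
Proof.
intros hN ha Hu Hneg r hr.
set (K := r^(N-1) * Derive (rlap N u) r / (2*r)^(N-1)).
pose proof (pow_lt (2*r) (N-1) ltac:(lra)) as h2r.
assert (Hc : (fun s => K * s) (2*r) - (fun s => K*s) r <= rlap N u (2*r) - rlap N u r).
{ apply (cmp (rlap N u) (fun s => K * s) (Derive (rlap N u)) (fun _ => K)); [lra| | |].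
  - intros x hx. apply (dvv N alpha beta u Hu); lra.
  - intros x hx. eapply deq. apply dscal. apply did. ring.
  - intros x hx. pose proof (pow_lt x (N-1) ltac:(lra)) as hx1.
    replace (Derive (rlap N u) x) with (x^(N-1) * Derive (rlap N u) x / x^(N-1)) by (field; lra).
    pose proof (Hmono N alpha beta u hN Hu r x hr ltac:(lra)) as hm.
    pose proof (Hnn N alpha beta u hN Hu r hr) as hp.
    assert (x^(N-1) <= (2*r)^(N-1)) by (apply pow_incr; lra).
    unfold K. unfold Rdiv. apply Rle_trans with (x ^ (N - 1) * Derive (rlap N u) x * / (2 * r) ^ (N - 1)).
    apply Rmult_le_compat_r; [left; apply Rinv_0_lt_compat; lra | lra].
    apply Rmult_le_compat_l; [lra|]. apply Rinv_le_contravar; lra. }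
simpl in Hc. pose proof (Hneg (2*r) ltac:(lra)).
pose proof (Hlow N alpha beta u hN ha Hu Hneg r hr) as hl.
assert (r * (exp (u r) * Rpower r (INR N + alpha) / (INR N + alpha)) / (2 * r) ^ (N - 1) <= K * r); [|lra].
unfold K. unfold Rdiv. rewrite (Rmult_comm r _), Rmult_assoc, (Rmult_comm r), <- Rmult_assoc.
replace (r ^ (N - 1) * Derive (rlap N u) r * / (2 * r) ^ (N - 1) * r) with
  (r ^ (N - 1) * Derive (rlap N u) r * / (2 * r) ^ (N - 1) * r) by ring.
apply Rmult_le_compat_r; [lra|]. apply Rmult_le_compat_r; [left; apply Rinv_0_lt_compat; lra|].
unfold Rdiv in hl. exact hl.
Qed.

Lemma rp_id N alpha r : (1 <= N)%nat -> 0 < r ->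
  Rpower r (INR N + alpha) * (r * r) = Rpower r (3 + alpha) * r^(N-1).
Proof.
intros hN hr. replace (r*r) with (r^2) by ring.
rewrite <- !Rpower_pow by exact hr. rewrite <- !Rpower_plus. f_equal.
rewrite minus_INR by lia. simpl. ring.
Qed.

Definition Kc N alpha := / (INR N * (INR N + alpha) * 2^(N-1)).

Lemma u1c N alpha beta u : (3 <= N)%nat -> -2 < alpha -> entire_radial_solution N alpha beta u ->
  (forall r, 0 < r -> rlap N u r <= 0) ->
  forall r, 0 < r -> Derive u r <= - (Kc N alpha * exp (u r) * Rpower r (3 + alpha)).
Proof.
intros hN ha Hu Hneg r hr.
pose proof (u1b N alpha beta u hN Hu r hr) as h1.
pose proof (vnegb N alpha beta u hN ha Hu Hneg r hr) as h2.
assert (h3 : 3 <= INR N) by (replace 3 with (INR 3) by (simpl; ring); apply le_INR; lia).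
assert (hNp : 0 < INR N) by lra.
set (B := r * (exp (u r) * Rpower r (INR N + alpha) / (INR N + alpha)) / (2 * r) ^ (N - 1)) in *.
assert (rlap N u r * r / INR N <= - B * r / INR N).
{ unfold Rdiv. apply Rmult_le_compat_r. left; apply Rinv_0_lt_compat; lra. nra. }
assert (E : B * r / INR N = Kc N alpha * exp (u r) * Rpower r (3 + alpha)).
{ unfold B, Kc. rewrite Rpow_mult_distr.
  pose proof (rp_id N alpha r ltac:(lia) hr) as e.
  pose proof (pow_lt r (N-1) hr). pose proof (pow_lt 2 (N-1) ltac:(lra)).
  apply (Rmult_eq_reg_r (INR N * (INR N + alpha) * 2^(N-1) * r^(N-1))).
  2:{ apply Rgt_not_eq. apply Rmult_lt_0_compat; [|lra]. apply Rmult_lt_0_compat; [|lra]. apply Rmult_lt_0_compat; lra. }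
  field_simplify; [|repeat split; lra..].
  replace (r ^ 2 * exp (u r) * Rpower r (INR N + alpha)) with (exp (u r) * (Rpower r (INR N + alpha) * (r*r))) by ring. rewrite e. ring. }
lra.
Qed.

Lemma Kc_pos N alpha : (3 <= N)%nat -> -2 < alpha -> 0 < Kc N alpha.
Proof.
intros hN ha. assert (h3 : 3 <= INR N) by (replace 3 with (INR 3) by (simpl; ring); apply le_INR; lia).
unfold Kc. apply Rinv_0_lt_compat. pose proof (pow_lt 2 (N-1) ltac:(lra)).
apply Rmult_lt_0_compat; [|lra]. apply Rmult_lt_0_compat; lra.
Qed.

Lemma final N alpha beta u : (3 <= N)%nat -> -2 < alpha -> entire_radial_solution N alpha beta u ->
  (forall r, 0 < r -> rlap N u r <= 0) ->
  forall r, 0 < r -> u r <= - (4 + alpha) * ln r - ln (Kc N alpha / (4 + alpha)).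
Proof.
intros hN ha Hu Hneg r hr. pose proof Hu as Hu'. destruct Hu' as (Hd & Heq & H0 & Hl0 & Hl1 & Hlv & HlH).
pose proof (Kc_pos N alpha hN ha) as hK.
set (c := Kc N alpha / (4 + alpha)). assert (hc : 0 < c) by (unfold c; apply Rdiv_lt_0_compat; lra).
set (P := fun s => exp (- u s) - c * Rpower s (4 + alpha)).
assert (LP : 1 <= P r).
{ apply (lim_le P 1 r hr).
  - intros s hs. apply (mono P (fun x => - Derive u x * exp (- u x) - c * ((4 + alpha) * Rpower x (4 + alpha - 1))) s r); [lra| |].
    + intros x hx. unfold P. apply dminus.
      * eapply deq. apply (is_derive_comp exp (fun s => - u s)). apply is_derive_exp.
        apply (is_derive_opp u). apply (du N alpha beta u Hu); lra. simpl. reflexivity.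
      * apply dscal. apply drpow; lra.
    + intros x hx. replace (4 + alpha - 1) with (3 + alpha) by ring.
      pose proof (u1c N alpha beta u hN ha Hu Hneg x ltac:(lra)) as h1.
      pose proof (exp_pos (- u x)).
      assert (E : exp (u x) * exp (- u x) = 1) by (rewrite exp_Ropp; field; apply Rgt_not_eq, exp_pos).
      unfold c. replace (Kc N alpha / (4 + alpha) * ((4 + alpha) * Rpower x (3 + alpha))) with (Kc N alpha * Rpower x (3 + alpha)) by (field; lra).
      assert (- Derive u x * exp (- u x) >= Kc N alpha * exp (u x) * Rpower x (3 + alpha) * exp (- u x)).
      { apply Rle_ge. apply Rmult_le_compat_r; lra. }
      replace (Kc N alpha * exp (u x) * Rpower x (3 + alpha) * exp (- u x)) with (Kc N alpha * Rpower x (3 + alpha) * (exp (u x) * exp (- u x))) in H1 by ring.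
      rewrite E in H1. lra.
  - unfold P. apply (filterlim_ext (fun s => exp (-1 * u s) + (-c) * Rpower s (4 + alpha))).
    intros x. unfold Rminus. f_equal. f_equal. ring. ring.
    pose proof (lim_plus _ _ _ _ (lim_exp _ _ (lim_mult (fun _ => -1) u _ _ (lim_const _) Hl0))
      (lim_mult (fun _ => -c) (fun s => Rpower s (4 + alpha)) _ _ (lim_const _) (lim_rpow (4 + alpha) ltac:(lra)))) as L.
    replace (exp (-1 * 0) + (-c) * 0) with 1 in L by (replace (-1 * 0) with 0 by ring; rewrite exp_0; ring). exact L. }
unfold P in LP.
assert (hrp : 0 < c * Rpower r (4 + alpha)) by (apply Rmult_lt_0_compat; [lra|apply rpow_pos]).
assert (ln (c * Rpower r (4 + alpha)) <= ln (exp (- u r))) by (apply lnmono; lra).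
rewrite ln_exp, ln_mult, ln_Rpower in H by (try lra; apply rpow_pos). lra.
Qed.

Lemma integ (f df : R -> R) k n a b : a <= b ->
  (forall x, a <= x <= b -> is_derive f x (df x)) ->
  (forall x, a <= x <= b -> k * (x - a)^n <= df x) ->
  f a + k * (b - a)^(S n) / INR (S n) <= f b.
Proof.
intros hab Hf Hk.
assert (hn : 0 < INR (S n)) by (apply lt_0_INR; lia).
pose proof (cmp f (fun x => k / INR (S n) * (x - a)^(S n)) df (fun x => k * (x - a)^n) a b hab Hf) as C.
assert (Hg : forall x, a <= x <= b -> is_derive (fun x => k / INR (S n) * (x - a)^(S n)) x (k * (x - a)^n)).
{ intros x hx. eapply deq. apply dscal. apply (is_derive_pow (fun t => t - a) (S n) x 1).
  eapply deq. apply dminus. apply did. apply dconst. ring. change (Init.Nat.pred (S n)) with n. field. lra. }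
specialize (C Hg Hk). cbv beta in C. replace ((a - a)^(S n)) with 0 in C by (simpl; ring).
replace (k * (b - a)^(S n) / INR (S n)) with (k / INR (S n) * (b - a)^(S n)) by (field; lra). lra.
Qed.

Lemma rpow_low alpha T t : 0 < T -> T <= t <= 3 * T ->
  Rpower T alpha * Rmin 1 (Rpower 3 alpha) <= Rpower t alpha.
Proof.
intros hT ht.
replace (Rpower t alpha) with (Rpower (T * (t / T)) alpha) by (f_equal; field; lra).
rewrite <- Rpower_mult_distr by (try lra; apply Rdiv_lt_0_compat; lra).
apply Rmult_le_compat_l; [left; apply rpow_pos|].
assert (h1 : 1 <= t / T) by (apply (Rmult_le_reg_r T); [lra|]; unfold Rdiv; rewrite Rmult_assoc, Rinv_l; lra).
assert (h2 : t / T <= 3) by (apply (Rmult_le_reg_r T); [lra|]; unfold Rdiv; rewrite Rmult_assoc, Rinv_l; lra).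
pose proof (lnmono 1 (t/T) ltac:(lra) h1) as l1. rewrite ln_1 in l1.
pose proof (lnmono (t/T) 3 ltac:(lra) h2) as l2.
unfold Rpower. destruct (Rle_lt_dec 0 alpha).
- apply Rle_trans with 1. apply Rmin_l. rewrite <- exp_0. apply expmono. nra.
- apply Rle_trans with (exp (alpha * ln 3)). apply Rmin_r. apply expmono. nra.
Qed.

Lemma unondec N alpha beta u Rs : entire_radial_solution N alpha beta u -> 0 < Rs ->
  (forall t, Rs <= t -> 0 <= Derive u t) -> forall a b, Rs <= a -> a <= b -> u a <= u b.
Proof.
intros Hu hR Hp a b ha hab. apply (mono u (Derive u)); auto.
- intros x hx. apply (du N alpha beta u Hu); lra.
- intros x hx. apply Hp; lra.
Qed.

Definition cT N alpha T := Rpower T alpha * Rmin 1 (Rpower 3 alpha) * T^(N-1) * T^(N-1) / (24 * (3*T)^(N-1) * (3*T)^(N-1)).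

Lemma stepl N alpha beta u Rs T s0 b : (3 <= N)%nat -> -2 < alpha -> entire_radial_solution N alpha beta u -> 0 < Rs ->
  (forall t, Rs <= t -> 0 <= rlap N u t /\ 0 <= Derive u t) ->
  Rs <= T -> T <= s0 -> s0 <= b -> b <= 3 * T ->
  u s0 + cT N alpha T * exp (u s0) * (b - s0)^4 <= u b.
Proof.
intros hN ha Hu hR HR hRT hTs hsb hb3.
pose proof Hu as Hu'. destruct Hu' as (Hd & Heq & _).
assert (hT : 0 < T) by lra.
set (m := Rpower T alpha * Rmin 1 (Rpower 3 alpha)).
assert (hm : 0 < m).
{ unfold m. apply Rmult_lt_0_compat. apply rpow_pos. unfold Rmin. destruct Rle_dec; [lra|apply rpow_pos]. }
set (W := (3*T)^(N-1)). assert (hW : 0 < W) by (apply pow_lt; lra).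
set (P := T^(N-1)). assert (hP : 0 < P) by (apply pow_lt; lra).
set (E0 := exp (u s0)). assert (hE : 0 < E0) by apply exp_pos.
set (A1 := m * P * E0). assert (hA : 0 < A1) by (unfold A1; apply Rmult_lt_0_compat; [apply Rmult_lt_0_compat|]; lra).
assert (Hun : forall x y, Rs <= x -> x <= y -> u x <= u y).
{ apply (unondec N alpha beta u Rs Hu hR). intros t ht. apply HR; lra. }
assert (powT : forall x, T <= x <= 3 * T -> P <= x^(N-1) <= W).
{ intros x hx. split; apply pow_incr; lra. }
assert (S1 : forall t, s0 <= t <= b -> A1 * (t - s0) <= t^(N-1) * Derive (rlap N u) t).
{ intros t ht.
  pose proof (integ (fun t => t^(N-1) * Derive (rlap N u) t) (fun x => x^(N-1) * (Rpower x alpha * exp (u x))) A1 0 s0 t ltac:(lra)) as I.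
  assert (I' : s0 ^ (N - 1) * Derive (rlap N u) s0 + A1 * (t - s0) ^ 1 / INR 1 <= t ^ (N - 1) * Derive (rlap N u) t).
  { apply I.
    - intros x hx. apply dH; auto; try lia; lra.
    - intros x hx. simpl. rewrite Rmult_1_r. unfold A1.
      pose proof (powT x ltac:(lra)). pose proof (rpow_low alpha T x hT ltac:(lra)). fold m in H0.
      assert (E0 <= exp (u x)) by (apply expmono; apply Hun; lra).
      replace (m * P * E0) with (P * (m * E0)) by ring. assert (0 <= m * E0) by (apply Rmult_le_pos; lra).
      apply Rmult_le_compat; try lra. apply Rmult_le_compat; lra. }
  pose proof (Hnn N alpha beta u hN Hu s0 ltac:(lra)). simpl in I'. lra. }
assert (S3 : forall t, s0 <= t <= b -> A1 / W * (t - s0)^2 / 2 <= rlap N u t).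
{ intros t ht.
  pose proof (integ (rlap N u) (Derive (rlap N u)) (A1 / W) 1 s0 t ltac:(lra)) as I.
  assert (I' : rlap N u s0 + A1 / W * (t - s0)^2 / INR 2 <= rlap N u t).
  { apply I.
    - intros x hx. apply (dvv N alpha beta u Hu); lra.
    - intros x hx. pose proof (S1 x ltac:(lra)). pose proof (powT x ltac:(lra)).
      pose proof (pow_lt x (N-1) ltac:(lra)).
      replace (Derive (rlap N u) x) with (x^(N-1) * Derive (rlap N u) x / x^(N-1)) by (field; lra).
      simpl. rewrite Rmult_1_r. unfold Rdiv.
      apply Rle_trans with (A1 * (x - s0) * / x^(N-1)).
      + rewrite Rmult_assoc, (Rmult_comm (/W)), <- Rmult_assoc. apply Rmult_le_compat_l. nra.
        apply Rinv_le_contravar; lra.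
      + apply Rmult_le_compat_r; [left; apply Rinv_0_lt_compat; lra|lra]. }
  pose proof (HR s0 ltac:(lra)). replace (INR 2) with 2 in I' by (simpl; ring). lra. }
assert (S4 : forall t, s0 <= t <= b -> P * (A1 / W / 2) * (t - s0)^3 / 3 <= t^(N-1) * Derive u t).
{ intros t ht.
  pose proof (integ (fun t => t^(N-1) * Derive u t) (fun x => x^(N-1) * rlap N u x) (P * (A1 / W / 2)) 2 s0 t ltac:(lra)) as I.
  assert (I' : s0^(N-1) * Derive u s0 + P * (A1 / W / 2) * (t - s0)^3 / INR 3 <= t^(N-1) * Derive u t).
  { apply I.
    - intros x hx. apply dG; auto; try lia; lra.
    - intros x hx. pose proof (S3 x ltac:(lra)). pose proof (powT x ltac:(lra)).
      assert (0 <= A1 / W / 2 * (x - s0)^2) by (apply Rmult_le_pos; [unfold Rdiv; apply Rmult_le_pos; [apply Rmult_le_pos; [lra|left; apply Rinv_0_lt_compat; lra]|lra] | apply pow_le; lra]).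
      replace (P * (A1 / W / 2) * (x - s0) ^ 2) with (P * (A1 / W / 2 * (x - s0) ^ 2)) by ring.
      apply Rmult_le_compat; try lra. }
  pose proof (HR s0 ltac:(lra)). pose proof (pow_le s0 (N-1) ltac:(lra)).
  assert (0 <= s0^(N-1) * Derive u s0) by (apply Rmult_le_pos; lra).
  replace (INR 3) with 3 in I' by (simpl; ring). lra. }
pose proof (integ u (Derive u) (P * (A1 / W / 2) / 3 / W) 3 s0 b hsb) as I.
assert (I' : u s0 + P * (A1 / W / 2) / 3 / W * (b - s0)^4 / INR 4 <= u b).
{ apply I.
  - intros x hx. apply (du N alpha beta u Hu); lra.
  - intros x hx. pose proof (S4 x hx). pose proof (powT x ltac:(lra)).
    pose proof (pow_lt x (N-1) ltac:(lra)).
    replace (Derive u x) with (x^(N-1) * Derive u x / x^(N-1)) by (field; lra).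
    assert (Hnn3 : 0 <= P * (A1 / W / 2) * (x - s0) ^ 3 / 3).
    { assert (h3 : 0 <= (x - s0)^3) by (apply pow_le; lra).
      assert (hk : 0 < P * (A1 / W / 2) / 3) by (apply Rdiv_lt_0_compat; [apply Rmult_lt_0_compat; [lra| apply Rdiv_lt_0_compat; [apply Rdiv_lt_0_compat; lra|lra]]|lra]).
      replace (P * (A1 / W / 2) * (x - s0) ^ 3 / 3) with (P * (A1 / W / 2) / 3 * (x - s0) ^ 3) by (field; lra). nra. }
    unfold Rdiv.
    apply Rle_trans with (P * (A1 * / W * / 2) * (x - s0) ^ 3 * / 3 * / x^(N-1)).
    + replace (P * (A1 * / W * / 2) * / 3 * / W * (x - s0) ^ 3) with (P * (A1 * / W * / 2) * (x - s0) ^ 3 * / 3 * / W) by ring.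
      apply Rmult_le_compat_l. unfold Rdiv in Hnn3. lra. apply Rinv_le_contravar; lra.
    + apply Rmult_le_compat_r; [left; apply Rinv_0_lt_compat; lra|]. unfold Rdiv in H. lra. }
replace (INR 4) with 4 in I' by (simpl; ring).
replace (cT N alpha T * E0 * (b - s0) ^ 4) with (P * (A1 / W / 2) / 3 / W * (b - s0) ^ 4 / 4). 2:{ unfold cT, A1, m, P, W, E0. field. apply Rgt_not_eq; apply pow_lt; lra. } lra.
Qed.

Lemma rpow_base_mono a b y : 0 < a -> a <= b -> 0 < y -> Rpower a y <= Rpower b y.
Proof.
intros ha hab hy. unfold Rpower. apply expmono. apply Rmult_le_compat_l; [lra|]. apply lnmono; lra.
Qed.

Lemma exp4 : 16 <= exp 4.
Proof.
pose proof (exp_ineq1 1 ltac:(lra)).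
replace 4 with (1+1+1+1) by ring. rewrite !exp_plus.
assert (2 <= exp 1) by lra. assert (4 <= exp 1 * exp 1) by nra. assert (16 <= (exp 1 * exp 1) * (exp 1 * exp 1)) by nra. replace (exp 1 * exp 1 * exp 1 * exp 1) with ((exp 1 * exp 1) * (exp 1 * exp 1)) by ring. lra.
Qed.

Lemma pow16 k : INR k <= 16 ^ k.
Proof.
induction k. simpl; lra. rewrite S_INR. simpl. pose proof (Rle_pow 16 0 k ltac:(lra) ltac:(lia)). simpl in H. lra.
Qed.

Lemma half_pow k : 0 < (/2)^k <= 1.
Proof.
split. apply pow_lt; lra. induction k. simpl; lra. simpl. pose proof (pow_lt (/2) k ltac:(lra)). lra.
Qed.

Lemma vneg N alpha beta u : (3 <= N)%nat -> -2 < alpha -> entire_radial_solution N alpha beta u ->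
  forall r0, 0 < r0 -> rlap N u r0 <= 0.
Proof.
intros hN ha Hu r0 hr0. pose proof Hu as Hu'. destruct Hu' as (Hd & Heq & _).
destruct (Rle_lt_dec (rlap N u r0) 0) as [h|h]; [exact h|exfalso].
set (a := rlap N u r0) in *.
assert (hva : forall t, r0 <= t -> a <= rlap N u t) by (intros t ht; apply (vmono N alpha beta u hN Hu); lra).
set (G := fun t => t^(N-1) * Derive u t).
set (k := a * r0^(N-1)). assert (hk : 0 < k) by (unfold k; apply Rmult_lt_0_compat; [lra|apply pow_lt; lra]).
set (Rs := r0 + Rabs (G r0) / k + 1).
assert (hRs : r0 + 1 <= Rs) by (unfold Rs; assert (0 <= Rabs (G r0) / k) by (apply Rdiv_le_0_compat; [apply Rabs_pos|lra]); lra).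
assert (GRs : 0 < G Rs).
{ pose proof (integ G (fun x => x^(N-1) * rlap N u x) k 0 r0 Rs ltac:(lra)) as I.
  assert (I' : G r0 + k * (Rs - r0)^1 / INR 1 <= G Rs).
  { apply I.
    - intros x hx. apply dG; auto; try lia; lra.
    - intros x hx. simpl. rewrite Rmult_1_r. unfold k. rewrite Rmult_comm.
      apply Rmult_le_compat. apply pow_le; lra. lra. apply pow_incr; lra. apply hva; lra. }
  simpl in I'. rewrite Rmult_1_r in I'.
  replace (k * (Rs - r0) / 1) with (Rabs (G r0) + k) in I' by (unfold Rs; field; lra).
  pose proof (Rle_abs (- G r0)). rewrite Rabs_Ropp in H. lra. }
assert (HR : forall t, Rs <= t -> 0 <= rlap N u t /\ 0 <= Derive u t).
{ intros t ht. split. pose proof (hva t ltac:(lra)). lra.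
  assert (G Rs <= G t).
  { apply (mono G (fun x => x^(N-1) * rlap N u x)); auto.
    - intros x hx. apply dG; auto; try lia; lra.
    - intros x hx. apply Rmult_le_pos. apply pow_le; lra. pose proof (hva x ltac:(lra)); lra. }
  unfold G in H. pose proof (pow_lt t (N-1) ltac:(lra)).
  destruct (Rle_lt_dec 0 (Derive u t)); auto.
  assert (t^(N-1) * Derive u t < 0) by (apply Rmult_pos_neg; auto). unfold G in GRs. lra. }
assert (hRs0 : 0 < Rs) by lra.
assert (Hun : forall x y, Rs <= x -> x <= y -> u x <= u y).
{ apply (unondec N alpha beta u Rs Hu hRs0). intros t ht. apply HR; lra. }
set (M0 := Rmin 1 (Rpower 3 alpha) / (24 * 3^(N-1) * 3^(N-1))).
assert (hM0 : 0 < M0).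
{ unfold M0. apply Rdiv_lt_0_compat. unfold Rmin. destruct Rle_dec; [lra|apply rpow_pos].
  pose proof (pow_lt 3 (N-1) ltac:(lra)). apply Rmult_lt_0_compat; [|lra]. apply Rmult_lt_0_compat; lra. }
set (ER := exp (u Rs)). assert (hER : 0 < ER) by apply exp_pos.
set (X := 4 / (M0 * ER)). assert (hX : 0 < X) by (unfold X; apply Rdiv_lt_0_compat; [lra|apply Rmult_lt_0_compat; lra]).
set (T := Rmax Rs (Rpower X (/ (4 + alpha)))).
assert (hT1 : Rs <= T) by apply Rmax_l.
assert (hT2 : Rpower X (/ (4 + alpha)) <= T) by apply Rmax_r.
assert (hT : 0 < T) by lra.
assert (cTe : cT N alpha T * T^4 = Rpower T (4 + alpha) * M0).
{ unfold cT, M0. rewrite Rpow_mult_distr.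
  replace (Rpower T (4 + alpha)) with (T^4 * Rpower T alpha).
  2:{ rewrite Rpower_plus. f_equal. rewrite <- Rpower_pow by lra. f_equal. simpl. ring. }
  field. split; apply Rgt_not_eq; apply pow_lt; lra. }
assert (hRT : X <= Rpower T (4 + alpha)).
{ apply Rle_trans with (Rpower (Rpower X (/ (4 + alpha))) (4 + alpha)).
  rewrite Rpower_mult. replace (/ (4 + alpha) * (4 + alpha)) with 1 by (field; lra). rewrite Rpower_1 by lra. lra.
  apply rpow_base_mono; try lra. apply rpow_pos. }
set (E := exp (u T)).
assert (hE : ER <= E) by (apply expmono; apply Hun; lra).
assert (h4 : 4 <= cT N alpha T * T^4 * E).
{ rewrite cTe. apply Rle_trans with (X * M0 * ER).
  unfold X. right. field. split; lra.
  apply Rmult_le_compat; try lra. apply Rmult_le_pos; lra. apply Rmult_le_compat_r; lra. }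
assert (hcT : 0 < cT N alpha T).
{ pose proof (pow_lt T 4 hT). pose proof (exp_pos (u T)). fold E in H0.
  destruct (Rle_lt_dec (cT N alpha T) 0); auto.
  assert (cT N alpha T * T^4 * E <= 0); [|lra].
  apply Rmult_le_0_r; [|lra]. apply Rmult_le_0_r; lra. }
set (rk := fun k => 3 * T - 2 * T * (/2)^k).
assert (rkS : forall k, rk (S k) = rk k + T * (/2)^k) by (intros k0; unfold rk; simpl; field).
assert (rkb : forall k, T <= rk k <= 3 * T).
{ intros k0. unfold rk. pose proof (half_pow k0). split; nra. }
assert (Cl : forall k, 16^k * E <= exp (u (rk k))).
{ induction k0.
  - unfold rk. simpl. replace (3 * T - 2 * T * 1) with T by ring. fold E. lra.
  - pose proof (stepl N alpha beta u Rs T (rk k0) (rk (S k0)) hN ha Hu hRs0 HR hT1 ltac:(apply rkb) ltac:(rewrite rkS; pose proof (half_pow k0); nra) ltac:(apply rkb)) as St.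
    replace (rk (S k0) - rk k0) with (T * (/2)^k0) in St by (rewrite rkS; ring).
    assert (Hinc : 4 <= cT N alpha T * exp (u (rk k0)) * (T * (/ 2) ^ k0) ^ 4).
    { apply Rle_trans with (cT N alpha T * (16^k0 * E) * (T * (/2)^k0)^4).
      - replace (cT N alpha T * (16 ^ k0 * E) * (T * (/ 2) ^ k0) ^ 4) with (cT N alpha T * T^4 * E * (16^k0 * ((/2)^4)^k0)).
        + rewrite <- Rpow_mult_distr. replace (16 * (/2)^4) with 1 by field. rewrite pow1. lra.
        + rewrite Rpow_mult_distr. rewrite <- pow_mult. rewrite <- pow_mult. rewrite Nat.mul_comm. ring.
      - apply Rmult_le_compat_r. apply pow_le. pose proof (half_pow k0); nra.
        apply Rmult_le_compat_l; lra. }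
    simpl (16 ^ S k0). apply Rle_trans with (exp (u (rk k0)) * exp 4).
    + pose proof exp4. pose proof (pow_le 16 k0 ltac:(lra)). assert (0 <= 16 ^ k0 * E) by (apply Rmult_le_pos; lra).
      replace (16 * 16 ^ k0 * E) with (16^k0 * E * 16) by ring. apply Rmult_le_compat; lra.
    + rewrite <- exp_plus. apply expmono. lra. }
assert (Bd : forall k, 16^k * E <= exp (u (3 * T))).
{ intros k0. apply Rle_trans with (exp (u (rk k0))). apply Cl. apply expmono. apply Hun. pose proof (rkb k0); lra. apply rkb. }
assert (hE0 : 0 < E) by apply exp_pos.
destruct (INR_archimed E (exp (u (3 * T))) ltac:(lra)) as [k0 hk0].
pose proof (Bd k0). pose proof (pow16 k0).
assert (INR k0 * E <= 16 ^ k0 * E) by (apply Rmult_le_compat_r; lra). lra.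
Qed.

Theorem lemma3p3 (N : nat) (alpha : R) :
  (3 <= N)%nat -> -2 < alpha ->
  exists C : R, 0 < C /\
    forall (beta : R) (u : R -> R),
      Rbar_le (Finite beta) (beta0 N alpha) ->
      entire_radial_solution N alpha beta u ->
      forall r : R, 0 < r -> u r <= - (4 + alpha) * ln r + C.
Proof.
intros hN ha.
exists (Rmax 1 (- ln (Kc N alpha / (4 + alpha)))). split.
- pose proof (Rmax_l 1 (- ln (Kc N alpha / (4 + alpha)))). lra.
- intros beta u _ Hu r hr.
  pose proof (final N alpha beta u hN ha Hu (vneg N alpha beta u hN ha Hu) r hr).
  pose proof (Rmax_r 1 (- ln (Kc N alpha / (4 + alpha)))). lra.
Qed.
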